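(* Let $O$ be a set of Boolean functions, $\textsc{prop}$ a finite set of propositional variables, and $p$ a propositional variable. Then $\mathrm{PL}_O[\textsc{prop}]\leq_{pc}\mathrm{ML}_{O\cup\{\Diamond\}}[\{p\}]$ and $\mathrm{PL}_O[\textsc{prop}]\leq_{pc}\mathrm{ML}_{O\cup\{\Box\}}[\{p\}]$.
   Context: $\mathrm{PL}_O[\textsc{prop}]$ is the set of propositional formulas $\phi::=x\mid f(\phi_1,\dots,\phi_n)$ with $x\in\textsc{prop}$ and $f\in O$, viewed as a concept class with examples the truth assignments $V:\textsc{prop}\to\{0,1\}$ and $\lambda(\phi)$ the set of satisfying assignments. $\mathrm{ML}_{O\cup\{\Diamond\}}[\{p\}]$ is the set of modal formulas $\phi::=p\mid f(\phi_1,\dots,\phi_n)\mid\Diamond\phi$ with $f\in O$ (Boolean functions interpreted pointwise), and similarly with $\Box$; it is viewed as a concept class whose examples are pointed finite Kripke models $(M,w)$ and $\lambda(\phi)=\{(M,w)\mid M,w\models\phi\}$. For concept classes $\mathcal{C}_i=(C_i,E_i,\lambda_i)$, $\mathcal{C}_1\leq_{pc}\mathcal{C}_2$ means there are $f:C_1\to C_2$ and $h:E_1\to E_2$ such that (i) for all $c\in C_1,e\in E_1$: $e\in\lambda_1(c)$ iff $h(e)\in\lambda_2(f(c))$; and (ii) for each $e\in E_2$, either $e\in\lambda_2(f(c))$ for all $c\in C_1$, or for no $c\in C_1$, or there is $e'\in E_1$ with $\{c\mid e\in\lambda_2(f(c))\}=\{c\mid e'\in\lambda_1(c)\}$. *)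

(* Defs.v *)
From mathcomp Require Import all_boot.
Set Implicit Arguments. Unset Strict Implicit. Unset Printing Implicit Defensive.

(** Concept classes (C, E, lambda): lambda c is the set of examples of c. *)
Record concept_class := ConceptClass {
  cc_C : Type;
  cc_E : Type;
  cc_lam : cc_C -> cc_E -> Prop }.

(** Polynomial(-free) concept reduction  C1 <=_pc C2 . Set equality
    {c | e in lam2 (f c)} = {c | e' in lam1 c} is stated pointwise. *)
Definition pc_reducible (K1 K2 : concept_class) : Prop :=
  exists (f : cc_C K1 -> cc_C K2) (h : cc_E K1 -> cc_E K2),
    (forall (c : cc_C K1) (e : cc_E K1), cc_lam c e <-> cc_lam (f c) (h e)) /\
    (forall e : cc_E K2,
        (forall c : cc_C K1, cc_lam (f c) e) \/
        (forall c : cc_C K1, ~ cc_lam (f c) e) \/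
        (exists e' : cc_E K1, forall c : cc_C K1, cc_lam (f c) e <-> cc_lam c e')).

Definition bfun : Type := {n : nat & ('I_n -> bool) -> bool}.
Definition bf_arity (f : bfun) : nat := projT1 f.
Definition bf_eval (f : bfun) : ('I_(bf_arity f) -> bool) -> bool := projT2 f.

Inductive pform (O : bfun -> Prop) (P : Type) : Type :=
| PVar : P -> pform O P
| PFun : forall f : bfun, O f -> ('I_(bf_arity f) -> pform O P) -> pform O P.

Fixpoint peval (O : bfun -> Prop) (P : Type) (V : P -> bool) (phi : pform O P) : bool :=
  match phi with
  | PVar x => V x
  | PFun f _ args => bf_eval (fun i => peval V (args i))
  end.

Definition PL (O : bfun -> Prop) (P : finType) : concept_class :=
  @ConceptClass (pform O P) (P -> bool) (fun phi V => peval V phi = true).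

Inductive modality := Dia | Box.

Inductive mform (O : bfun -> Prop) (m : modality) : Type :=
| MVar_p : mform O m
| MFun : forall f : bfun, O f -> ('I_(bf_arity f) -> mform O m) -> mform O m
| MMod : mform O m -> mform O m.

Record kmodel := KModel {
  kW :> finType;
  kR : rel kW;
  kVp : kW -> bool }.

Definition pointed_model : Type := {M : kmodel & kW M}.

Fixpoint msat (O : bfun -> Prop) (m : modality) (M : kmodel) (w : kW M)
  (phi : mform O m) {struct phi} : bool :=
  match phi with
  | MVar_p => kVp w
  | MFun f _ args => bf_eval (fun i => msat w (args i))
  | MMod psi =>
      match m with
      | Dia => [exists v : kW M, kR w v && msat v psi]
      | Box => [forall v : kW M, kR w v ==> msat v psi]
      end
  end.

Definition ML (O : bfun -> Prop) (m : modality) : concept_class :=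
  @ConceptClass (mform O m) pointed_model
    (fun phi e => msat (projT2 e) phi = true).

(* Main.v *)
From Stdlib Require Import FunctionalExtensionality.
Require Import Defs.
From mathcomp Require Import all_boot.
Set Implicit Arguments. Unset Strict Implicit.

Fixpoint tr (O : bfun -> Prop) (P : Type) (m : modality) (t : P -> mform O m)
  (phi : pform O P) : mform O m :=
  match phi with
  | PVar x => t x
  | PFun f H args => MFun H (fun i => tr t (args i))
  end.

Lemma tr_sat (O : bfun -> Prop) (P : Type) (m : modality) (t : P -> mform O m)
  (M : kmodel) (w : kW M) (phi : pform O P) :
  msat w (tr t phi) = peval (fun x => msat w (t x)) phi.
Proof.
elim: phi => [x|f H args IH] //=.
f_equal; apply: functional_extensionality => i; exact: IH.
Qed.

Definition chain (N : nat) (g : nat -> bool) : kmodel :=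
  @KModel (ordinal N.+1) (fun i j => val j == (val i).+1) (fun i => g (val i)).

Lemma chain_iter (O : bfun -> Prop) (m : modality) N g k (i : 'I_N.+1) :
  i + k <= N -> msat (M := chain N g) i (iter k (@MMod O m) (MVar_p O m)) = g (i + k).
Proof.
elim: k i => [|k IH] i /=; first by rewrite addn0.
move=> Hik.
have Hlt : (i.+1 < N.+1)%N by rewrite ltnS; apply: leq_trans Hik; rewrite -addn1 leq_add2l.
have E : forall v : 'I_N.+1, (val v == (val i).+1) -> msat (M := chain N g) v (iter k (@MMod O m) (MVar_p O m)) = g (i + k.+1).
  move=> v /eqP Hv; rewrite IH Hv ?addSnnS //.
case: m E IH => E IH.
- apply/existsP/idP.
  + by case=> v /andP [Hv Hs]; rewrite -(E v Hv).
  + move=> Hg; exists (Ordinal Hlt); rewrite /= eqxx /=; by rewrite E.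
- apply/forallP/idP.
  + move=> /(_ (Ordinal Hlt)); rewrite /= eqxx /= => Hs; by rewrite -(E (Ordinal Hlt)).
  + move=> Hg v; apply/implyP => Hv; by rewrite E.
Qed.

Lemma red (O : bfun -> Prop) (P : finType) (m : modality) :
  pc_reducible (PL O P) (ML O m).
Proof.
pose N := size (enum P).
pose t := fun x : P => iter (index x (enum P)) (@MMod O m) (MVar_p O m).
exists (tr t).
exists (fun V : P -> bool => existT _ (chain N (fun j => nth false (map V (enum P)) j)) (ord0 : 'I_N.+1)).
split.
- move=> c V /=; rewrite tr_sat.
  suff -> : (fun x => msat (M := chain N (fun j => nth false (map V (enum P)) j)) (ord0 : 'I_N.+1) (t x)) = V by [].
  apply: functional_extensionality => x.
  have Hx : (index x (enum P) < N)%N by rewrite index_mem mem_enum.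
  rewrite /t chain_iter /= ?add0n; last exact: ltnW.
  by rewrite (nth_map x) // nth_index // mem_enum.
- move=> [M w]; right; right.
  exists (fun x => msat w (t x)) => c /=; by rewrite tr_sat.
Qed.

Theorem lemmaB4 (O : bfun -> Prop) (P : finType) :
  pc_reducible (PL O P) (ML O Dia) /\ pc_reducible (PL O P) (ML O Box).
Proof. split; exact: red. Qed.
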